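(* For the Hydra game played on any finite rooted unweighted tree $T$ of height $h_T$ with $L_T$ leaves, the total (expected) cost of the algorithm $\mathrm{HERC}$ is at most $O(h_T\cdot(1+\log L_T))$, i.e., there is an absolute constant $C$ such that for every such tree and every (oblivious) adversary, the total cost of $\mathrm{HERC}$ is at most $C\,h_T(1+\log L_T)$.
   Context: Hydra game: played between an online algorithm and an oblivious adversary on a fixed finite rooted unweighted tree $T$ known in advance. Each node is asleep, alive, or dead. Initially the root $r_T$ is alive and all other nodes are asleep. In each step the adversary picks an alive node $w$, makes it dead, and makes all its children alive (so all ancestors of alive nodes are dead and all their descendants asleep). The algorithm must always remain at an alive node (initially the root); if its node is killed it must move to an alive node $w'$, paying $\mathrm{dist}(w,w')$, the shortest-path distance in $T$. The game ends when all nodes except one are dead; the goal is to minimize total movement cost. $\mathrm{rank}(u)$ is the number of non-dead leaves in the subtree of $u$. The randomized algorithm $\mathrm{HERC}$ keeps its position distributed according to $\eta$, where $\eta(u)=\mathrm{rank}(u)/\mathrm{rank}(r_T)$ for alive $u$ and $\eta(u)=0$ otherwise; when an alive node $u$ is killed, if $u$ is not a leaf its probability is distributed to its children proportionally to their ranks, and if $u$ is a leaf all other probabilities are scaled by $1/(1-\eta(u))$. Its cost is the transport cost: moving probability mass $p$ from $u$ to $w$ costs $p\cdot \mathrm{dist}(u,w)$ (which equals the expected movement cost of a corresponding randomized strategy). *)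

(* Defs.v *)
From HB Require Import structures.
From mathcomp Require Import all_boot all_order all_algebra.
From mathcomp Require Import reals exp.
Set Implicit Arguments. Unset Strict Implicit. Unset Printing Implicit Defensive.
Import Order.TTheory GRing.Theory Num.Theory.
Local Open Scope ring_scope.

Section Hydra.
Variables (T : finType) (r : T) (par : T -> T).

Definition is_rooted_tree : Prop :=
  par r = r /\ forall u : T, exists k : nat, iter k par u = r.

Definition adj (u v : T) : bool := (u != v) && ((par u == v) || (par v == u)).

Fixpoint reach (n : nat) (u v : T) : bool :=
  if n is n'.+1 then [exists w, adj u w && reach n' w v] else u == v.

(* Shortest-path distance in the (connected) tree: least n with a walk of
   length n (distances in a tree on #|T| nodes are < #|T|). *)
Definition dist (u v : T) : nat := find (fun n => reach n u v) (iota 0 #|T|).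

Definition depth (u : T) : nat := dist u r.
Definition height : nat := \max_(u : T) depth u.

Definition is_child (c u : T) : bool := (c != r) && (par c == u).
Definition is_leaf (u : T) : bool := [forall c, ~~ is_child c u].
Definition nleaves : nat := #|[set l | is_leaf l]|.

Definition desc (v u : T) : bool := [exists k : 'I_#|T|, iter k par v == u].

(* Game states are described by the set D of dead nodes.  A node is alive
   iff it is not dead and it is the root or its parent is dead; all other
   non-dead nodes are asleep. *)
Definition alive (D : {set T}) (u : T) : bool :=
  (u \notin D) && ((u == r) || (par u \in D)).

Definition rank (D : {set T}) (u : T) : nat :=
  #|[set l | is_leaf l & desc l u && (l \notin D)]|.

Variable R : realType.

Definition eta (D : {set T}) (u : T) : R :=
  if alive D u then (rank D u)%:R / (rank D r)%:R else 0.

(* HERC's transport plan when the adversary kills the alive node w in state D: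
   plan x y = probability mass moved from x to y. *)
Definition herc_plan (D : {set T}) (w : T) (x y : T) : R :=
  if x == w then
    (if ~~ is_leaf w then
       (if is_child y w then eta D w * (rank D y)%:R / (rank D w)%:R else 0)
     else
       (if alive D y && (y != w) then eta D w * (eta D y / (1 - eta D w))
        else 0))
  else (if x == y then eta D x else 0).

Definition transport_cost (plan : T -> T -> R) : R :=
  \sum_(x : T) \sum_(y : T) plan x y * (dist x y)%:R.

Definition ended (D : {set T}) : bool := #|~: D| == 1%N.

Fixpoint valid_play (D : {set T}) (s : seq T) : bool :=
  if s is w :: s' then [&& ~~ ended D, alive D w & valid_play (w |: D) s']
  else true.

Fixpoint herc_cost (D : {set T}) (s : seq T) : R :=
  if s is w :: s' then transport_cost (herc_plan D w) + herc_cost (w |: D) s'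
  else 0.

End Hydra.

(* Main.v *)
Require Import Defs.
From HB Require Import structures.
From mathcomp Require Import all_boot all_order all_algebra.
From mathcomp Require Import reals exp.
Import Order.TTheory GRing.Theory Num.Theory.
Set Implicit Arguments. Unset Strict Implicit. Unset Printing Implicit Defensive.

Section Graph.
Variables (T : finType) (r : T) (par : T -> T).

Lemma adj_sym u v : adj par u v = adj par v u.
Proof. by rewrite /adj eq_sym orbC. Qed.

Lemma reach_cat a b x y z :
  reach par a x y -> reach par b y z -> reach par (a + b) x z.
Proof.
elim: a x => [|a IH] x /=; first by move/eqP->; rewrite add0n.
case/existsP => w /andP[hw hr] hb.
by apply/existsP; exists w; rewrite hw /=; exact: IH.
Qed.

Lemma reach_sym n u v : reach par n u v -> reach par n v u.
Proof.
elim: n u v => [|n IH] u v /=; first by rewrite eq_sym.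
case/existsP=> w /andP[hw hr].
have h1 : reach par 1 w u.
  by rewrite /=; apply/existsP; exists u; rewrite eqxx andbT adj_sym.
by have := reach_cat (IH _ _ hr) h1; rewrite addn1.
Qed.

Lemma dist_max u v : dist par u v <= #|T|.
Proof. by rewrite /dist (leq_trans (find_size _ _)) // size_iota. Qed.

Lemma dist_le n u v : reach par n u v -> dist par u v <= n.
Proof.
move=> h; case: (ltnP n #|T|) => hn; last exact: leq_trans (dist_max u v) hn.
rewrite leqNgt; apply/negP => lt.
by have := before_find 0 lt; rewrite nth_iota // add0n h.
Qed.

Lemma dist_reach u v : dist par u v < #|T| -> reach par (dist par u v) u v.
Proof.
move=> h; have hh : has (fun n => reach par n u v) (iota 0 #|T|).
  by rewrite has_find size_iota.
by have := nth_find 0 hh; rewrite nth_iota ?add0n // -(size_iota 0 #|T|) -has_find.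
Qed.

Lemma dist_tri x y : dist par x y <= depth r par x + depth r par y.
Proof.
rewrite /depth.
case: (ltnP (dist par x r) #|T|) => hx; last first.
  by apply: leq_trans (dist_max x y) (leq_trans hx (leq_addr _ _)).
case: (ltnP (dist par y r) #|T|) => hy; last first.
  by apply: leq_trans (dist_max x y) (leq_trans hy (leq_addl _ _)).
apply: dist_le; apply: reach_cat (dist_reach hx) (reach_sym (dist_reach hy)).
Qed.

Lemma depth_height x : depth r par x <= height r par.
Proof. rewrite /height; exact: (@leq_bigmax T (fun u => depth r par u) x). Qed.

Lemma dist_xx x : dist par x x = 0.
Proof. by apply/eqP; rewrite -leqn0; apply: (@dist_le 0) => /=. Qed.

Lemma desc_fconnect v u : desc par v u = fconnect par v u.
Proof.
apply/existsP/idP => [[k /eqP <-]|h]; first exact: fconnect_iter.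
have hk : findex par v u < #|T|.
  by apply: leq_trans (findex_max h) (max_card _).
by exists (Ordinal hk); rewrite /= iter_findex.
Qed.

Hypothesis tree : is_rooted_tree r par.

Lemma iter_r k : iter k par r = r.
Proof. by case: tree => hr _; elim: k => //= k ->. Qed.

Lemma to_root x : fconnect par x r.
Proof. by case: tree => _ /(_ x) [k <-]; exact: fconnect_iter. Qed.

Lemma par_fix x : par x = x -> x = r.
Proof.
move=> hx; case: tree => _ /(_ x) [k <-].
by elim: k => //= k <-; rewrite hx.
Qed.

Lemma leaf_desc w l : is_leaf r par w -> fconnect par l w -> l = w.
Proof.
move=> /forallP hw /iter_findex; move: (findex par l w) => k.
elim: k l => // k IH l; rewrite iterSr => hk.
case: (eqVneq (par l) w) => hp; last first.
  by have := IH _ hk => e; rewrite e eqxx in hp.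
case: (eqVneq l w) => // hlw.
have hlr : l != r.
  apply/negP => /eqP e; move: hlw; rewrite -hp e.
  by case: tree => -> _; rewrite eqxx.
by have := hw l; rewrite /is_child hlr hp eqxx.
Qed.

Lemma fconnect_total l a b :
  fconnect par l a -> fconnect par l b -> fconnect par a b || fconnect par b a.
Proof.
move=> /iter_findex ha /iter_findex hb.
move: (findex par l a) (findex par l b) ha hb => i j <- <-.
case: (leqP i j) => hij.
  by rewrite -(subnK hij) iterD fconnect_iter.
by rewrite -(subnK (ltnW hij)) iterD fconnect_iter orbT.
Qed.

Definition closed (D : {set T}) := forall x, x \in D -> par x \in D.

Lemma closed_iter D x k : closed D -> x \in D -> iter k par x \in D.
Proof. by move=> hD hx; elim: k => //= k IH; apply: hD. Qed.

Lemma alive_unique D a b : closed D -> alive r par D a -> alive r par D b ->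
  fconnect par a b -> a = b.
Proof.
move=> hD /andP[ha1 ha2] /andP[hb1 _] /iter_findex.
move: (findex par a b) => [|m]; first by [].
rewrite iterSr => e.
case/orP: ha2 => [/eqP ea | hp].
  by move: e; rewrite ea; case: tree => -> _; rewrite iter_r.
by move: hb1; rewrite -e closed_iter.
Qed.

Definition anc (u : T) := [set x | (x != r) && fconnect par u x].

Lemma card_anc n u : reach par n u r -> #|anc u| <= n.
Proof.
elim: n u => [|n IH] u /=.
  move/eqP => ->; rewrite leqn0 cards_eq0; apply/eqP/setP => x.
  rewrite !inE; apply/negP => /andP[hx /iter_findex].
  by rewrite iter_r => e; rewrite e eqxx in hx.
case/existsP => w /andP[/andP[huw hpar] hw].
case/orP: hpar => /eqP hp.
  have sub : anc u \subset u |: anc w.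
    apply/subsetP => x; rewrite !inE => /andP[hx /iter_findex].
    move: (findex par u x) => [|k]; first by move=> /= ->; rewrite eqxx.
    rewrite iterSr hp => e; rewrite hx /= -e fconnect_iter orbT //.
  apply: leq_trans (subset_leq_card sub) _.
  by rewrite cardsU1 -add1n leq_add ?leq_b1 ?IH.
have sub : anc u \subset anc w.
  apply/subsetP => x; rewrite !inE => /andP[hx hc]; rewrite hx /=.
  by apply: connect_trans hc; rewrite -hp fconnect1.
by apply: leq_trans (subset_leq_card sub) _; rewrite (leq_trans (IH _ hw)).
Qed.

Lemma card_anc_height u : #|anc u| <= height r par.
Proof.
apply: leq_trans (depth_height u); rewrite /depth.
case: (ltnP (dist par u r) #|T|) => h.
  exact: card_anc (dist_reach h).
by apply: leq_trans (max_card _) h.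
Qed.


Definition PL (D : {set T}) l := is_leaf r par l && (l \notin D).

Lemma card_sum (p : pred T) : #|[set x | p x]| = \sum_x p x.
Proof.
rewrite cardsE -sum1_card big_mkcond /=; apply: eq_bigr => x _.
by rewrite unfold_in; case: (p x).
Qed.

Lemma rank_sum D x : rank r par D x = \sum_l (PL D l && fconnect par l x).
Proof.
rewrite /rank card_sum; apply: eq_bigr => l _; rewrite desc_fconnect /PL.
by case: (is_leaf r par l); case: (l \in D); case: (fconnect par l x).
Qed.

Lemma rank_root D : rank r par D r = \sum_l PL D l.
Proof. by rewrite rank_sum; apply: eq_bigr => l _; rewrite to_root andbT. Qed.

Lemma sum_rank_le D (Q : pred T) c :
  (forall l, PL D l -> #|[set x | Q x && fconnect par l x]| <= c) ->
  \sum_(x | Q x) rank r par D x <= c * rank r par D r.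
Proof.
move=> hc.
rewrite (eq_bigr _ (fun x _ => rank_sum D x)) exchange_big /= rank_root.
rewrite big_distrr /=; apply: leq_sum => l _.
case hP: (PL D l) => /=; last by rewrite big1.
rewrite muln1; apply: leq_trans (hc _ hP); rewrite card_sum big_mkcond /=.
by apply: eq_leq; apply: eq_bigr => x _; case: (Q x).
Qed.

Lemma alive_sum D : closed D ->
  \sum_(y | alive r par D y) rank r par D y <= rank r par D r.
Proof.
move=> hD; rewrite -[X in _ <= X]mul1n; apply: sum_rank_le => l _.
case: (pickP (fun y => alive r par D y && fconnect par l y)) => [y0 hy0|none].
  have sub : [set x | alive r par D x && fconnect par l x] \subset [set y0].
    apply/subsetP => x; rewrite !inE => /andP[ax fx].
    case/andP: hy0 => ay fy.
    case/orP: (fconnect_total fy fx) => h.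
      by rewrite (alive_unique hD ay ax h).
    by rewrite (alive_unique hD ax ay h).
  by apply: leq_trans (subset_leq_card sub) _; rewrite cards1.
have sub : [set x | alive r par D x && fconnect par l x] \subset set0.
  by apply/subsetP => x; rewrite !inE none.
by apply: leq_trans (subset_leq_card sub) _; rewrite cards0.
Qed.

Definition Bn (D : {set T}) :=
  \sum_(x | (x != r) && (par x \notin D)) rank r par D x.

Lemma Bn_le D : Bn D <= height r par * rank r par D r.
Proof.
apply: sum_rank_le => l _; apply: leq_trans (card_anc_height l).
apply: subset_leq_card; apply/subsetP => x; rewrite !inE.
by case/andP => /andP[-> _] ->.
Qed.

End Graph.

From mathcomp Require Import ring lra.
Local Open Scope ring_scope.

Definition Hn (R : realType) n : R := \sum_(i < n) (i.+1%:R)^-1.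

Lemma Hn_ln (R : realType) n : Hn R n <= 1 + ln (n%:R : R).
Proof.
elim: n => [|n IH]; first by rewrite /Hn big_ord0 ln0 // addr0.
rewrite /Hn big_ord_recr /= -/(Hn R n).
case: n IH => [|n] IH.
  by rewrite /Hn big_ord0 ln1 add0r invr1 addr0.
set m : R := (n.+2)%:R.
have m0 : 0 < m by rewrite /m ltr0n.
have e : (n.+1%:R : R) = m * (1 + - m^-1).
  by rewrite mulrDr mulr1 mulrN divff ?gt_eqF // /m -[n.+2]addn1 natrD addrK.
have hx : -1 < - m^-1.
  rewrite ltrN2 invf_lt1 // /m ltr1n //.
have hl := le_ln1Dx hx.
have hp : 0 < 1 + - m^-1 by rewrite -ltrBlDl sub0r.
rewrite e lnM ?posrE // in IH.
apply: le_trans (lerD IH (lexx _)) _.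
move: hl; move: (ln (1 - m^-1)) (ln m) (m^-1) => a b c; lra.
Qed.

Lemma Hn_ge0 (R : realType) n : 0 <= Hn R n.
Proof. by apply: sumr_ge0 => i _; rewrite invr_ge0 ler0n. Qed.

Lemma aux_ineq (R : realType) (b' b h : R) (k' : nat) :
  0 <= b' -> b' <= b -> b' <= h * k'%:R -> 0 <= h ->
  b' / k'%:R - b / (k'.+1)%:R <= h / (k'.+1)%:R.
Proof.
move=> b0 bb bh h0.
have k1 : (0 : R) < (k'.+1)%:R by rewrite ltr0n.
case: k' bh k1 => [|k'] bh k1.
  have -> : b' = 0 by apply/le_anti; rewrite b0 andbT; move: bh; rewrite mulr0.
  rewrite mul0r add0r invr1 !mulr1; lra.
have k0 : (0 : R) < (k'.+1)%:R by rewrite ltr0n.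
set q := b' / (k'.+1)%:R.
have hq : q <= h by rewrite /q ler_pdivrMr.
have eb : b' = q * (k'.+1)%:R by rewrite /q mulrVK // unitfE gt_eqF.
have e2 : q - b' / (k'.+2)%:R = q / (k'.+2)%:R.
  rewrite eb -[(k'.+2)%:R]natr1 in k1 *.
  field; rewrite gt_eqF //; have := ler0n R k'; lra.
have : b' / (k'.+2)%:R <= b / (k'.+2)%:R by rewrite ler_pM2r // invr_gt0.
have : q / (k'.+2)%:R <= h / (k'.+2)%:R by rewrite ler_pM2r // invr_gt0.
move: e2; move: (b' / (k'.+2)%:R) (b / (k'.+2)%:R) (q / (k'.+2)%:R) (h / (k'.+2)%:R) => x1 x2 x3 x4.
lra.
Qed.

Section Main.
Variables (T : finType) (r : T) (par : T -> T) (R : realType).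
Hypothesis tree : is_rooted_tree r par.

Local Notation rk D x := (rank r par D x).
Local Notation K D := ((rank r par D r)%:R : R).
Local Notation hh := ((height r par)%:R : R).

Definition Phi (D : {set T}) : R :=
  (Bn r par D)%:R / K D + 3 * hh * Hn R (rank r par D r).

Lemma Phi_ge0 D : 0 <= Phi D.
Proof.
rewrite /Phi addr_ge0 // ?mulr_ge0 ?invr_ge0 ?ler0n ?Hn_ge0 //.
Qed.

Lemma eta_alive D u : alive r par D u -> Defs.eta r par R D u = (rk D u)%:R / K D.
Proof. by rewrite /Defs.eta => ->. Qed.

Lemma tc_row D w : transport_cost par (herc_plan r par R D w) =
  \sum_y herc_plan r par R D w w y * (dist par w y)%:R.
Proof.
rewrite /transport_cost (bigD1 w) //= [X in _ + X]big1 ?addr0 // => x hx.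
apply: big1 => y _; rewrite /herc_plan (negbTE hx).
by case: eqP => [<-|_]; rewrite ?dist_xx ?mulr0 ?mul0r.
Qed.

Lemma closedU D w : closed par D -> alive r par D w -> closed par (w |: D).
Proof.
move=> hD /andP[_ hw] x; rewrite !inE => /orP[/eqP ->|hx].
  case/orP: hw => [/eqP ->|->]; last by rewrite orbT.
  by case: tree => -> _; rewrite eqxx.
by rewrite hD ?orbT.
Qed.

Lemma step_nonleaf D w : closed par D -> alive r par D w -> ~~ is_leaf r par w ->
  transport_cost par (herc_plan r par R D w) + Phi (w |: D) <= Phi D.
Proof.
move=> hD hw hnl.
have hwD : w \notin D by case/andP: hw.
have rkE x : rk (w |: D) x = rk D x.
  rewrite /rank; apply: eq_card => l; rewrite !inE.
  case hl: (is_leaf r par l) => //=.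
  have -> : (l == w) = false by apply/eqP => e; rewrite -e hl in hnl.
  by [].
set S := (\sum_(y | is_child r par y w) rk D y)%N.
have BE : Bn r par D = (Bn r par (w |: D) + S)%N.
  rewrite /Bn (bigID (fun x => par x == w)) /= addnC; congr (_ + _)%N.
    apply: eq_big => x; last by move=> _; rewrite rkE.
    by rewrite in_setU1 negb_or; case: (x != r); case: (par x == w); case: (par x \in D).
  apply: eq_bigl => x; rewrite /is_child.
  case: (x != r) => //=; case: eqP => [->|]; by rewrite ?hwD ?andbF.
have cost : transport_cost par (herc_plan r par R D w) <= S%:R / K D.
  rewrite tc_row /herc_plan eqxx hnl /= /S natr_sum mulr_suml [X in _ <= X]big_mkcond /=.
  apply: ler_sum => y _; case hy: (is_child r par y w); last by rewrite mul0r.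
  have hd : (dist par w y <= 1)%N.
    apply: (@dist_le _ par 1) => /=; apply/existsP; exists y.
    rewrite eqxx andbT /adj.
    case/andP: hy => hyr /eqP hpy; rewrite hpy eqxx orbT andbT.
    apply/eqP => e; move: hpy; rewrite -e => /(par_fix tree) e'.
    by rewrite -e e' eqxx in hyr.
  rewrite (eta_alive hw).
  have hd' : ((dist par w y)%:R : R) <= 1 by rewrite -[1 in X in _ <= X]/(1%:R) ler_nat.
  have hd0 : (0 : R) <= (dist par w y)%:R by rewrite ler0n.
  case: (eqVneq (rk D w) 0%N) => hz.
    rewrite hz !mul0r; by rewrite mulr_ge0 ?invr_ge0 ?ler0n.
  have -> : (rk D w)%:R / K D * (rk D y)%:R / (rk D w)%:R = (rk D y)%:R / K D.
    by rewrite mulrAC [X in X * _]mulrAC divff ?pnatr_eq0 // mul1r mulrC.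
  apply: ler_piMr => //; by rewrite mulr_ge0 ?invr_ge0 ?ler0n.
have hK : K (w |: D) = K D by rewrite rkE.
rewrite /Phi hK rkE BE natrD [(_ + _) / _]mulrDl.
move: cost; move: (transport_cost _ _) ((Bn r par (w |: D))%:R / K D) (S%:R / K D) (3 * hh * Hn R (rk D r)) => a b c d.
lra.
Qed.


Lemma step_leaf D w : closed par D -> alive r par D w -> is_leaf r par w ->
  transport_cost par (herc_plan r par R D w) + Phi (w |: D) <= Phi D.
Proof.
move=> hD hw hl.
have hwD : w \notin D by case/andP: hw.
set D' := w |: D.
have rw1 : (rk D w <= 1)%N.
  rewrite /rank -(cards1 w); apply: subset_leq_card; apply/subsetP => l.
  rewrite !inE desc_fconnect => /andP[_ /andP[hc _]].
  by rewrite (leaf_desc tree hl hc).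
have KE : rk D r = (rk D' r).+1.
  rewrite !rank_root // (bigD1 w) //= [in RHS](bigD1 w) //=.
  rewrite {1 3}/PL hl hwD in_setU1 eqxx /= add0n add1n; congr _.+1.
  by apply: eq_bigr => l hl'; rewrite /PL in_setU1 (negbTE hl').
have Ssum : \sum_(y | alive r par D y) Defs.eta r par R D y <= 1.
  rewrite (eq_bigr (fun y => (rk D y)%:R / K D)); last by move=> y hy; rewrite eta_alive.
  rewrite -mulr_suml -natr_sum.
  case: (eqVneq (rk D r) 0%N) => hK; first by rewrite hK invr0 mulr0 ler01.
  rewrite ler_pdivrMr ?ltr0n ?lt0n // mul1r ler_nat; exact: alive_sum.
have K1 : (1 : R) <= K D by rewrite KE -[1 in X in X <= _]/(1%:R) ler_nat.
have K0 : (0 : R) < K D by apply: lt_le_trans K1; exact: ltr01.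
set ew := Defs.eta r par R D w.
have ewK : ew <= (K D)^-1.
  rewrite /ew eta_alive // ler_pdivrMr // mulVf ?gt_eqF //.
  by rewrite -[1 in X in _ <= X]/(1%:R) ler_nat.
have ew0 : 0 <= ew by rewrite /ew eta_alive // mulr_ge0 ?invr_ge0 ?ler0n.
have ew1 : ew <= 1 by apply: le_trans ewK _; rewrite invf_le1.
set Sw := \sum_(y | alive r par D y && (y != w)) Defs.eta r par R D y.
have hSw : Sw <= 1 - ew.
  move: Ssum; rewrite (bigD1 w) //= -/ew -/Sw; lra.
have Sw0 : 0 <= Sw.
  by apply: sumr_ge0 => y /andP[hy _]; rewrite eta_alive // mulr_ge0 ?invr_ge0 ?ler0n.
have cost : transport_cost par (herc_plan r par R D w) <= 2 * (hh / K D).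
  rewrite tc_row /herc_plan eqxx hl /=.
  apply: le_trans (_ : \sum_y (if alive r par D y && (y != w)
      then (2 * hh * (ew / (1 - ew))) * Defs.eta r par R D y else 0) <= _).
    apply: ler_sum => y _; case hy: (alive r par D y && (y != w)); last by rewrite mul0r.
    have hd : ((dist par w y)%:R : R) <= 2 * hh.
      rewrite -[2]/(2%:R) -natrM ler_nat mul2n -addnn.
      by rewrite (leq_trans (dist_tri r par w y)) // leq_add // depth_height.
    have ey0 : 0 <= Defs.eta r par R D y.
      by case/andP: hy => hy _; rewrite eta_alive // mulr_ge0 ?invr_ge0 ?ler0n.
    have c0 : 0 <= ew * (Defs.eta r par R D y / (1 - ew)).
      by rewrite mulr_ge0 // mulr_ge0 // invr_ge0 subr_ge0.
    apply: le_trans (ler_wpM2l c0 hd) _; rewrite le_eqVlt; apply/orP; left; apply/eqP; ring.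
  rewrite -big_mkcond -mulr_sumr /= -/Sw.
  case: (eqVneq (1 - ew) 0) => h1.
    by rewrite h1 invr0 mulr0 mulr0 mul0r mulr_ge0 // ?mulr_ge0 ?invr_ge0 ?ler0n // ltW.
  have h1p : 0 < 1 - ew by rewrite lt_neqAle eq_sym h1 subr_ge0.
  have hq : ew / (1 - ew) * Sw <= ew.
    by rewrite mulrAC ler_pdivrMr // ler_wpM2l.
  have h0 : (0 : R) <= hh by rewrite ler0n.
  rewrite -mulrA -mulrA ler_wpM2l //; apply: le_trans (ler_wpM2l h0 hq) _.
  by rewrite ler_wpM2l.
have BB : (Bn r par D' <= Bn r par D)%N.
  rewrite /Bn [X in (X <= _)%N]big_mkcond [X in (_ <= X)%N]big_mkcond /=.
  apply: leq_sum => x _; rewrite in_setU1 negb_or.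
  case: (x != r) => //=; case: (par x == w) => //=; case: (par x \in D) => //=.
  apply: subset_leq_card; apply/subsetP => l; rewrite !inE negb_or.
  by case/and4P => -> -> _ ->.
have BK := Bn_le tree D'.
rewrite /Phi KE /Hn big_ord_recr /= -/(Hn R _).
rewrite KE in cost.
set k' := rk D' r in BK cost *.
have A := @aux_ineq R (Bn r par D')%:R (Bn r par D)%:R hh k' (ler0n _ _)
  ltac:(by rewrite ler_nat) ltac:(by rewrite -natrM ler_nat) (ler0n _ _).
rewrite mulrDr -/(hh / _) [3 * hh * _]mulrC -mulrA mulrC.
move: A cost.
move: ((Bn r par D')%:R / k'%:R) ((Bn r par D)%:R / (k'.+1)%:R) (hh / (k'.+1)%:R)
  (transport_cost _ _) (3 * hh * Hn R k') => a b c d e.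
lra.
Qed.


Lemma main_ind D s : closed par D -> valid_play r par D s ->
  herc_cost r par R D s <= Phi D.
Proof.
elim: s D => [|w s IH] D hD /=; first by move=> _; exact: Phi_ge0.
case/and3P => _ hw hv.
apply: le_trans (_ : transport_cost par (herc_plan r par R D w) + Phi (w |: D) <= _).
  by rewrite lerD2l; apply: IH => //; exact: closedU.
case hl: (is_leaf r par w); first exact: step_leaf.
by apply: step_nonleaf; rewrite ?hl.
Qed.

Lemma Phi0 : Phi set0 <= 4 * hh * (1 + ln ((nleaves r par)%:R : R)).
Proof.
have KE : rank r par set0 r = nleaves r par.
  rewrite rank_root // /nleaves card_sum; apply: eq_bigr => l _.
  by rewrite /PL inE andbT.
rewrite /Phi KE.
set L := nleaves r par.
have h0 : (0 : R) <= hh by rewrite ler0n.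
have hB : (Bn r par set0)%:R / L%:R <= hh.
  case: (eqVneq L 0%N) => hL; first by rewrite hL invr0 mulr0.
  rewrite ler_pdivrMr ?ltr0n ?lt0n // -natrM ler_nat /L -KE; exact: Bn_le.
have hH := Hn_ln R L.
have hl : (0 : R) <= ln L%:R.
  case: (eqVneq L 0%N) => hL; first by rewrite hL ln0.
  by apply: ln_ge0; rewrite -[1]/(1%:R) ler_nat lt0n.
have hx : 0 <= hh * ln (L%:R : R) by rewrite mulr_ge0.
have h3 : 3 * hh * Hn R L <= 3 * hh * (1 + ln L%:R).
  by rewrite ler_wpM2l // mulr_ge0.
have e1 : 3 * hh * (1 + ln (L%:R : R)) = 3 * hh + 3 * (hh * ln L%:R) by ring.
have e2 : 4 * hh * (1 + ln (L%:R : R)) = 4 * hh + 4 * (hh * ln L%:R) by ring.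
rewrite e2; rewrite e1 in h3; move: hB h3 hx h0.
move: ((Bn r par set0)%:R / L%:R) (3 * hh * Hn R L) (hh * ln (L%:R : R)) hh => a b c d.
lra.
Qed.

End Main.

Unset Implicit Arguments.
Set Strict Implicit.
Theorem theorem4 (R : realType) :
  exists C : R,
    forall (T : finType) (r : T) (par : T -> T),
      is_rooted_tree r par ->
      forall s : seq T,
        valid_play r par set0 s ->
        herc_cost r par R set0 s
          <= C * (height r par)%:R * (1 + ln (nleaves r par)%:R).
Proof.
exists 4 => T r par tree s hs.
apply: le_trans (Phi0 R tree).
apply: main_ind => //.
by move=> x; rewrite inE.
Qed.
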